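(* Let $G$ be a topological group and let $H\in\mathrm{RUEB}(L^0(G))$. Then $[H]\in\mathrm{RUEB}(G)$, where $$[H]=\{f\circ h_n\circ c_{i,a} : f\in H,\ n\in\mathbb N\setminus\{0\},\ i\in\{1,\dots,n\},\ a\in G^{n-1}\}.$$
   Context: For a topological group $K$, equip $K$ with its right uniformity (basic entourages $\{(x,y): xy^{-1}\in U\}$, $U$ an identity neighbourhood); $\mathrm{RUC}_b(K)$ denotes the bounded real functions on $K$ uniformly continuous for it, and $\mathrm{RUEB}(K)$ the set of subsets of $\mathrm{RUC}_b(K)$ that are norm-bounded and uniformly equicontinuous (for every $\epsilon>0$ there is an identity neighbourhood $U$ with $|f(x)-f(y)|\le\epsilon$ for all $f$ in the set and all $x,y$ with $xy^{-1}\in U$). Let $\lambda$ be Lebesgue measure on $[0,1]$. $L^{0}(G)$ is the group of $\lambda$-a.e. equivalence classes of strongly $\lambda$-measurable maps $[0,1]\to G$ (maps $f$ such that for every $\epsilon>0$ there is a closed $A$ with $\lambda([0,1]\setminus A)\le\epsilon$ and $f|_A$ continuous), with pointwise operations and the topology of convergence in measure, whose identity neighbourhood basis consists of $N(U,\epsilon)=\{f:\lambda(\{x: f(x)\notin U\})<\epsilon\}$, $U$ an open identity neighbourhood in $G$, $\epsilon>0$. For $n\ge1$, $h_n\colon G^n\to L^0(G)$ sends $(g_1,\dots,g_n)$ to the map constantly $g_j$ on $[(j-1)/n,j/n)$, $j=1,\dots,n$. For $i\in\{1,\dots,n\}$ and $a\in G^{n-1}$, $c_{i,a}\colon G\to G^n$,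 $x\mapsto(a_1,\dots,a_{i-1},x,a_i,\dots,a_{n-1})$. *)

(* Defs.v *)
From HB Require Import structures.
From mathcomp Require Import all_boot all_order all_algebra.
From mathcomp Require Import all_classical all_reals all_analysis.
Set Implicit Arguments. Unset Strict Implicit. Unset Printing Implicit Defensive.
Import Order.TTheory GRing.Theory Num.Theory numFieldNormedType.Exports.
Local Open Scope classical_set_scope.
Local Open Scope ring_scope.

Definition is_topgroup (G : topologicalType) (mul : G -> G -> G)
    (inv : G -> G) (e : G) : Prop :=
  [/\ (forall x y z, mul x (mul y z) = mul (mul x y) z),
      (forall x, mul e x = x /\ mul x e = x),
      (forall x, mul (inv x) x = e /\ mul x (inv x) = e),
      continuous (fun p : G * G => mul p.1 p.2) &
      continuous inv].

Section Defs.
Context (R : realType) (G : topologicalType) (mul : G -> G -> G)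
  (inv : G -> G) (e : G).

Definition RUCb (f : G -> R) : Prop :=
  (exists M : R, forall x, `|f x| <= M) /\
  (forall eps : R, 0 < eps -> exists U : set G, nbhs e U /\
     forall x y, U (mul x (inv y)) -> `|f x - f y| <= eps).

Definition RUEB (H : set (G -> R)) : Prop :=
  [/\ H `<=` RUCb,
      (exists M : R, forall f, H f -> forall x, `|f x| <= M) &
      (forall eps : R, 0 < eps -> exists U : set G, nbhs e U /\
         forall f x y, H f -> U (mul x (inv y)) -> `|f x - f y| <= eps)].

Definition unit_interval : set R := `[0%R, 1%R].

(* strongly lambda-measurable maps [0,1] -> G (represented as maps R -> G,
   only the values on [0,1] matter) *)
Definition strongly_measurable (x : R -> G) : Prop :=
  forall eps : R, 0 < eps -> exists A : set R,
    [/\ closed A, A `<=` unit_interval,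
        (lebesgue_measure (unit_interval `\` A) <= eps%:E)%E &
        {within A, continuous x}].

(* lambda-a.e. equality on [0,1] (the equivalence defining L^0(G)) *)
Definition ae_eq01 (x y : R -> G) : Prop :=
  (@lebesgue_measure R).-negligible [set t | unit_interval t /\ x t <> y t].

(* A real function on L^0(G) is represented as a function on maps R -> G whose
   values on strongly measurable maps depend only on the a.e.-class. *)
Definition L0fun (f : (R -> G) -> R) : Prop :=
  forall x y, strongly_measurable x -> strongly_measurable y ->
    ae_eq01 x y -> f x = f y.

(* Basic identity neighbourhoods N(U, eps) of L^0(G), applied to x y^{-1}
   (pointwise operations) *)
Definition in_N (U : set G) (delta : R) (z : R -> G) : Prop :=
  (lebesgue_measure [set t | unit_interval t /\ ~ U (z t)] < delta%:E)%E.

Definition RUCb_L0 (f : (R -> G) -> R) : Prop :=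
  [/\ L0fun f,
      (exists M : R, forall x, strongly_measurable x -> `|f x| <= M) &
      (forall eps : R, 0 < eps -> exists (U : set G) (delta : R),
         [/\ open U, U e, 0 < delta &
         forall x y, strongly_measurable x -> strongly_measurable y ->
           in_N U delta (fun t => mul (x t) (inv (y t))) ->
           `|f x - f y| <= eps])].

Definition RUEB_L0 (H : set ((R -> G) -> R)) : Prop :=
  [/\ H `<=` RUCb_L0,
      (exists M : R, forall f, H f -> forall x, strongly_measurable x ->
          `|f x| <= M) &
      (forall eps : R, 0 < eps -> exists (U : set G) (delta : R),
         [/\ open U, U e, 0 < delta &
         forall f x y, H f -> strongly_measurable x -> strongly_measurable y ->
           in_N U delta (fun t => mul (x t) (inv (y t))) ->
           `|f x - f y| <= eps])].

(* h_{n+1} : G^{n+1} -> L^0(G): constantly g_j on [j/(n+1), (j+1)/(n+1))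
   (0-indexed j); the value at t = 1 (a null set) is taken to be g_n. *)
Definition hn (n : nat) (g : 'I_n.+1 -> G) : R -> G :=
  fun t => g (inord (minn (Num.truncn (t * n.+1%:R)) n)).

(* c_{i,a} : G -> G^{n+1}, inserting x at (0-indexed) position i into
   a in G^n. *)
Definition cia (n : nat) (i : 'I_n.+1) (a : 'I_n -> G) (x : G) : 'I_n.+1 -> G :=
  fun k => match unlift i k with None => x | Some j => a j end.

Definition bracket (H : set ((R -> G) -> R)) : set (G -> R) :=
  [set g | exists f, H f /\ exists n (i : 'I_n.+1) (a : 'I_n -> G),
     g = fun x => f (hn (cia i a x))].

End Defs.

(* Main.v *)
Require Import Defs.
From mathcomp Require Import all_boot all_order all_algebra.
From mathcomp Require Import all_classical all_reals all_analysis.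
From mathcomp Require Import lra measurable_realfun.
Set Implicit Arguments. Unset Strict Implicit. Unset Printing Implicit Defensive.
Import Order.TTheory GRing.Theory Num.Theory numFieldNormedType.Exports.
Local Open Scope classical_set_scope.
Local Open Scope ring_scope.

Lemma step_aux (R : realType) (n : nat) (u v : R) :
  (minn (Num.truncn (u * n.+1%:R)) n < minn (Num.truncn (v * n.+1%:R)) n)%N ->
  exists k, (k < n)%N /\ u < k.+1%:R / n.+1%:R <= v.
Proof.
set m := Num.truncn (u * n.+1%:R) => h.
have hmn : (m < n)%N.
  move: h; rewrite /minn; case: ifP => // /negbT; rewrite -leqNgt => hnm.
  by move=> /leq_trans /(_ (geq_minr _ _)); rewrite ltnn.
have hm : minn m n = m by rewrite /minn hmn.
rewrite hm in h.
have hv : (m < Num.truncn (v * n.+1%:R))%N.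
  by apply: leq_trans h (geq_minl _ _).
exists m; split => //.
have N0 : (0 : R) < n.+1%:R by rewrite ltr0n.
rewrite ltr_pdivlMr // ler_pdivrMr //.
rewrite truncn_gt_nat in hv; rewrite hv andbT.
exact: truncnS_gt.
Qed.
Definition phi (R : realType) (n : nat) (t : R) := minn (Num.truncn (t * n.+1%:R)) n.

Lemma step_local (R : realType) (n : nat) (d s t : R) :
  `|t - s| < d ->
  ~ (\bigcup_(k < n) ball (k.+1%:R / n.+1%:R : R) d) t ->
  phi n s = phi n t.
Proof.
move=> hst hB; rewrite /phi.
case: (ltngtP (minn (Num.truncn (s * n.+1%:R)) n) (minn (Num.truncn (t * n.+1%:R)) n)) => // h.
- have [k [kn /andP[h1 h2]]] := step_aux h.
  exfalso; apply: hB; exists k => //=.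
  rewrite /ball /= distrC ger0_norm; last by rewrite subr_ge0.
  apply: le_lt_trans hst; apply: le_trans _ (ler_norm _); by rewrite lerD2l lerN2 ltW.
- have [k [kn /andP[h1 h2]]] := step_aux h.
  exfalso; apply: hB; exists k => //=.
  rewrite /ball /= ger0_norm; last by rewrite subr_ge0 ltW.
  apply: le_lt_trans hst; rewrite distrC; apply: le_trans _ (ler_norm _); by rewrite lerD2r.
Qed.


Lemma hn_sm (R : realType) (G : topologicalType) (n : nat) (g : 'I_n.+1 -> G) :
  strongly_measurable (@hn R G n g).
Proof.
move=> eps eps0.
have N0 : (0 : R) < n.+1%:R by rewrite ltr0n.
pose d := eps / (2 * n.+1%:R).
have d0 : 0 < d by rewrite /d divr_gt0 // mulr_gt0.
pose B := \bigcup_(k < n) ball (k.+1%:R / n.+1%:R : R) d.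
have oB : open B by apply: bigcup_open => k _; exact: ball_open.
exists (@unit_interval R `\` B); split.
- apply: closedI; first exact: interval_closed.
  exact: open_closedC.
- by move=> t [].
- apply: (@le_trans _ _ (lebesgue_measure B)).
    apply: le_measure; rewrite ?inE.
    + apply: measurableD; first exact: measurable_itv.
      apply: measurableD; first exact: measurable_itv.
      exact: open_measurable.
    + exact: open_measurable.
    + move=> t [Ut nA]; apply: contrapT => nB; exact: nA (conj Ut nB).
  rewrite /B bigcup_mkord.
  have HB := @Boole_inequality _ R _ (@lebesgue_measure R)
    (fun k => ball (k.+1%:R / n.+1%:R : R) d) n.
  apply: le_trans (HB _) _.
    by move=> k _; exact: measurable_ball.
  rewrite (eq_bigr (fun=> (d *+ 2)%:E)); last first.
    by move=> k _; exact: (lebesgue_measure_ball _ (ltW d0)).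
  rewrite sumEFin lee_fin sumr_const card_ord.
  have E : eps = d * (2 * n.+1%:R) by rewrite /d divfK // gt_eqF // mulr_gt0.
  rewrite [X in _ <= X]E -mulrnA -[d *+ _]mulr_natr ler_pM2l // natrM ler_pM2l // ler_nat; exact: leqnSn.
- have K := (@subspace_continuousP _ (@unit_interval R `\` B) G (hn g)).2.
  suff K' : forall t, (@unit_interval R `\` B) t ->
      hn g @ within (@unit_interval R `\` B) (nbhs t) --> hn g t.
    by move=> x; exact: (K K' x).
  move=> t [Ut nBt].
  move=> W /= Wnb.

  change ((within (@unit_interval R `\` B) (nbhs t)) (hn g @^-1` W)).
  rewrite /within /=.
  apply/nbhs_ballP; exists d => // s bs [Us nBs] /=.
  rewrite /hn.
  have -> : minn (Num.truncn (s * n.+1%:R)) n = minn (Num.truncn (t * n.+1%:R)) n.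
    exact: (@step_local R n d s t).
  exact: nbhs_singleton Wnb.
Qed.

Lemma hn_cia_pt (R : realType) (G : topologicalType) (mul : G -> G -> G)
    (inv : G -> G) (e : G) (HG : is_topgroup mul inv e) (n : nat)
    (i : 'I_n.+1) (a : 'I_n -> G) (x y : G) (U : set G) :
  U e -> U (mul x (inv y)) ->
  forall t : R, U (mul (hn (cia i a x) t) (inv (hn (cia i a y) t))).
Proof.
move=> Ue Uxy t; rewrite /hn /cia; case: unlift => [j|] //.
by case: HG => _ _ Hi _ _; rewrite (proj2 (Hi _)).
Qed.

Lemma bracket_equi (R : realType) (G : topologicalType) (mul : G -> G -> G)
    (inv : G -> G) (e : G) (HG : is_topgroup mul inv e)
    (H : set ((R -> G) -> R)) (HH : RUEB_L0 mul inv e H) (eps : R) :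
  0 < eps -> exists U : set G, nbhs e U /\
    forall g x y, bracket H g -> U (mul x (inv y)) -> `|g x - g y| <= eps.
Proof.
case: HH => _ _ Heq eps0; have [U [delta [oU Ue d0 HU]]] := Heq eps eps0.
exists U; split; first by apply: open_nbhs_nbhs; split.
move=> g x y [f [Hf [n [i [a ->]]]]] Uxy /=.
apply: HU => //; try exact: hn_sm.
rewrite /in_N (_ : [set t | _ ] = set0) ?measure0 ?lte_fin //.
apply/seteqP; split => t //= [_ nU]; apply: nU; exact: (@hn_cia_pt R G mul inv e HG n i a x y U Ue Uxy t).
Qed.

Lemma bracket_bound (R : realType) (G : topologicalType) (mul : G -> G -> G)
    (inv : G -> G) (e : G)
    (H : set ((R -> G) -> R)) (HH : RUEB_L0 mul inv e H) :
  exists M : R, forall g, bracket H g -> forall x, `|g x| <= M.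
Proof.
case: HH => _ [M HM] _; exists M => g [f [Hf [n [i [a ->]]]]] x /=.
by apply: HM => //; exact: hn_sm.
Qed.

Theorem lemma4p3 (R : realType) (G : topologicalType) (mul : G -> G -> G)
    (inv : G -> G) (e : G) (HG : is_topgroup mul inv e)
    (H : set ((R -> G) -> R)) (HH : RUEB_L0 mul inv e H) :
  RUEB mul inv e (bracket H).
Proof.
have [M HM] := bracket_bound HH.
split.
- move=> g Hg; split; first by exists M; exact: HM.
  move=> eps eps0; have [U [nU HU]] := bracket_equi HG HH eps0.
  by exists U; split => // x y; exact: HU.
- by exists M.
- move=> eps eps0; have [U [nU HU]] := bracket_equi HG HH eps0.
  by exists U; split => // f x y; exact: HU.
Qed.
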